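(* Let $n \ge 4$ and let $\frac{a_1}{b_1} < \frac{a_2}{b_2} < \cdots$ be the Farey sequence of order $n$. Let $f(n)$ be the largest integer such that $(a_l - a_k)(b_l - b_k) \ge 0$ for all indices $k, l$ with $|l-k| \le f(n)$. Then $$f(n) \le \left\lfloor \frac{n}{4} \right\rfloor + d,$$ where $d = 1, 2, 2, 4$ according as $n \equiv 0, 1, 2, 3 \pmod 4$.
   Context: The Farey sequence of order $n$ is the increasing list of all reduced fractions $\frac{a}{b}$ with $0 \le \frac{a}{b} \le 1$ and $1 \le b \le n$ (including $\frac01$ and $\frac11$), each written in lowest terms. Two fractions $\frac{a}{b}, \frac{a'}{b'}$ (in lowest terms) are called similarly ordered if $(a'-a)(b'-b) \ge 0$. For $n \ge 4$ the Farey sequence of order $n$ contains two fractions that are not similarly ordered, so $f(n)$ is well defined. *)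

(* Defs.v *)
From mathcomp Require Import all_boot all_order all_algebra.
Set Implicit Arguments. Unset Strict Implicit. Unset Printing Implicit Defensive.
Import Order.TTheory GRing.Theory Num.Theory.

(* A fraction a/b is represented by the pair (a, b). *)

Definition farey (n : nat) : seq (nat * nat) :=
  sort (fun x y : nat * nat => x.1 * y.2 <= y.1 * x.2)
    [seq ab <- flatten [seq [seq (a, b) | a <- iota 0 b.+1] | b <- iota 1 n]
       | coprime ab.1 ab.2].

Definition sim_ordered (x y : nat * nat) : bool :=
  (0 <= (y.1%:Z - x.1%:Z) * (y.2%:Z - x.2%:Z))%R.

Definition window_ok (n m : nat) : bool :=
  let F := farey n in
  [forall k : 'I_(size F), forall l : 'I_(size F),
     ((l - k <= m) && (k - l <= m)) ==>
       sim_ordered (nth (0, 1) F k) (nth (0, 1) F l)].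

(* For n >= 4 window_ok n m fails for
   every m >= size (farey n) - 1 (some pair is not similarly ordered), so the
   maximum over m < size (farey n) is the true largest such integer. *)
Definition f (n : nat) : nat :=
  \max_(m < size (farey n) | window_ok n m) m.

Definition dfarey (n : nat) : nat :=
  match n %% 4 with 0 => 1 | 1 => 2 | 2 => 2 | _ => 4 end.

(* Main.v *)
Require Import Defs.
From mathcomp Require Import all_boot all_order all_algebra.
From mathcomp Require Import zify.
Import Order.TTheory GRing.Theory Num.Theory.

Definition leF (x y : nat * nat) : bool := x.1 * y.2 <= y.1 * x.2.

Lemma mem_farey n z : (z \in farey n) = [&& coprime z.1 z.2, 0 < z.2 <= n & z.1 <= z.2].
Proof.
rewrite /farey mem_sort mem_filter; case: z => a b.
case: (coprime a b); last by []; rewrite !andTb.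
apply/flatten_mapP/idP.
- move=> [b' hb]; case/mapP => a' ha [-> ->]; move: hb ha; rewrite !mem_iota add0n add1n !ltnS => /andP [-> ->] -> //.
- move=> /andP [hb ab]; case/andP: hb => b0 bn; exists b; first by rewrite mem_iota add1n ltnS b0 bn.
  apply/mapP; exists a => //;  by rewrite mem_iota add0n ltnS ab.
Qed.

Lemma uniq_flat (s : seq nat) (g : nat -> seq (nat * nat)) :
  uniq s -> (forall b, uniq (g b)) -> (forall b z, z \in g b -> z.2 = b) ->
  uniq (flatten (map g s)).
Proof.
move=> us ug hg; elim: s us => //= b s IH /andP [bs us].
rewrite cat_uniq ug IH // andbT; apply/hasP => -[z /flatten_mapP [b' b's zb'] zb].
move: (hg _ _ zb) (hg _ _ zb') => -> E; subst b'. by rewrite b's in bs.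
Qed.

Lemma uniq_farey n : uniq (farey n).
Proof.
rewrite /farey sort_uniq filter_uniq //; apply: uniq_flat; first exact: iota_uniq.
- move=> b; rewrite map_inj_uniq ?iota_uniq // => a a' []; done.
- by move=> b z /mapP [a _ ->].
Qed.

Lemma sorted_farey n : sorted leF (farey n).
Proof. apply: sort_sorted => x y; exact: leq_total. Qed.

Lemma leF_trans x y z : 0 < y.2 -> leF x y -> leF y z -> leF x z.
Proof.
rewrite /leF => hy h1 h2.
have : x.1 * z.2 * y.2 <= z.1 * x.2 * y.2.
  have e1 : x.1 * z.2 * y.2 = (x.1 * y.2) * z.2 by rewrite mulnAC.
  have e2 : z.1 * x.2 * y.2 = (z.1 * y.2) * x.2 by rewrite mulnAC.
  rewrite e1 e2; apply: (leq_trans (leq_mul h1 (leqnn _))).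
  have e3 : y.1 * x.2 * z.2 = (y.1 * z.2) * x.2 by rewrite mulnAC.
  rewrite e3; exact: leq_mul h2 (leqnn _).
by rewrite leq_pmul2r.
Qed.

Lemma leF_antisym n x y : x \in farey n -> y \in farey n -> leF x y -> leF y x -> x = y.
Proof.
rewrite !mem_farey /leF; case: x => a b; case: y => c d /=.
move=> /and3P [cab /andP [b0 _] _] /and3P [ccd /andP [d0 _] _] h1 h2.
rewrite coprime_sym in cab; rewrite coprime_sym in ccd.
have E : a * d = c * b by apply/eqP; rewrite eqn_leq h1 h2.
have bd : b %| d by rewrite -(Gauss_dvdr d (cab : coprime b a)) E dvdn_mull.
have db : d %| b by rewrite -(Gauss_dvdr b (ccd : coprime d c)) -E dvdn_mull.
have Ebd : b = d by apply/eqP; rewrite eqn_dvd bd db.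
subst d; congr pair; apply/eqP; by rewrite -(eqn_pmul2r b0) E.
Qed.

Lemma index_count (T : eqType) (r : rel T) (s : seq T) y :
  pairwise r s -> y \in s -> r y y -> (forall z, z \in s -> r z y -> r y z -> z = y) ->
  index y s = count (fun z => ~~ r y z) s.
Proof.
elim: s => //= z s IH /andP [az ps] ys ryy anti.
case: eqP => [E|ne]; first subst z.
  rewrite ryy /=; apply/esym/eqP; rewrite -leqn0 leqNgt -has_count; apply/hasP => -[w ws].
  by move: az => /allP /(_ w ws) ->.
have ys' : y \in s by move: ys; rewrite inE => /orP [/eqP E|//]; rewrite E in ne.
rewrite IH //; last by move=> w ws; apply: anti; rewrite inE ws orbT.
have rzy : r z y by move: az => /allP /(_ y ys').
case ryz : (r y z) => //=.
by exfalso; apply: ne; apply: anti => //; rewrite inE eqxx.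
Qed.

Lemma count_split (T : Type) (P Q : pred T) s : (forall z, Q z -> P z) ->
  count P s = count Q s + count (fun z => P z && ~~ Q z) s.
Proof.
move=> h; elim: s => //= z s ->.
case Qz : (Q z); first by rewrite (h _ Qz).
case: (P z) => /=; lia.
Qed.

Lemma key n x y (L : seq (nat * nat)) M :
  x \in farey n -> y \in farey n -> x.1 < y.1 -> y.2 < x.2 -> leF x y ->
  (forall z, z \in farey n -> leF x z -> ~~ leF y z -> z \in L) ->
  size L <= M.+1 -> f n <= M.
Proof.
move=> xF yF h1 h2 lxy hL hM.
set F := farey n.
have pos : forall z, z \in F -> 0 < z.2.
  by move=> z; rewrite mem_farey => /and3P [_ /andP [] ].
have pw : pairwise leF F.
  have tr : {in mem F & &, transitive leF}.
    by move=> b a c aF bF cF; apply: leF_trans; apply: pos.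
  rewrite -(sorted_pairwise_in tr (allss F)); exact: sorted_farey.
have refl : forall z, leF z z by move=> z; rewrite /leF.
have anti : forall w, w \in F -> forall z, z \in F -> leF z w -> leF w z -> z = w.
  move=> w wF z zF; exact: leF_antisym zF wF.
have ix := @index_count _ leF F _ pw xF (refl x) (anti x xF).
have iy := @index_count _ leF F _ pw yF (refl y) (anti y yF).
have cs := @count_split _ (fun z => ~~ leF y z) (fun z => ~~ leF x z) F.
rewrite cs in iy; last first.
  move=> z; apply: contra => lyz; exact: leF_trans (pos _ yF) lxy lyz.
have cL : count (fun z => ~~ leF y z && ~~ ~~ leF x z) F <= size L.
  rewrite -size_filter; apply: uniq_leq_size; first by rewrite filter_uniq // uniq_farey.
  move=> z; rewrite mem_filter negbK => /andP [/andP [nyz xz] zF]; exact: hL.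
apply/bigmax_leqP => m wok; rewrite leqNgt; apply/negP => Mm.
have kx : index x F < size F by rewrite index_mem.
have ky : index y F < size F by rewrite index_mem.
move: wok; rewrite /window_ok => /forallP /(_ (Ordinal kx)) /forallP /(_ (Ordinal ky)).
rewrite /= !nth_index // ix iy.
have -> : count (fun z => ~~ leF x z) F - (count (fun z => ~~ leF x z) F + count (fun z => ~~ leF y z && ~~ ~~ leF x z) F) = 0 by lia.
have -> : (count (fun z => ~~ leF x z) F + count (fun z => ~~ leF y z && ~~ ~~ leF x z) F) - count (fun z => ~~ leF x z) F <= m.
  lia.
rewrite leq0n /= /sim_ordered.
have i1 : (0 < y.1%:Z - x.1%:Z)%R by rewrite subr_gt0 ltz_nat.
have i2 : (y.2%:Z - x.2%:Z < 0)%R by rewrite subr_lt0 ltz_nat.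
by rewrite leNgt (pmulr_rlt0 _ i1) i2.
Qed.
Lemma cop_div d a b : coprime a b -> d %| a -> d %| b -> d = 1.
Proof. move=> /eqP c da db; apply/eqP; rewrite -dvdn1 -c dvdn_gcd da db //. Qed.

Lemma cop_of a b u v : u * a = v * b + 1 -> coprime a b.
Proof.
move=> E; rewrite /coprime -dvdn1.
have -> : 1 = u * a - v * b by lia.
by apply: dvdn_sub; [apply: dvdn_mull; apply: dvdn_gcdl | apply: dvdn_mull; apply: dvdn_gcdr].
Qed.

Lemma caseA k a b : coprime a b -> 0 < b <= 4*k+4 -> a <= b ->
  (2*k+1)*b <= a*(4*k+4) -> a*(4*k+3) < (2*k+2)*b ->
  (a = 2*k+1 /\ b = 4*k+4) \/ (a = 1 /\ b = 2) \/ (k+1 <= a < 2*k+2 /\ b = 2*a+1).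
Proof.
move=> c hb ab h1 h2.
have l1 : 2*a <= b by nia.
have l2 : b <= 2*a+2 by nia.
have [e|[e|e]] : b = 2*a \/ b = 2*a+1 \/ b = 2*a+2 by lia.
- right; left; have a1 : a = 1.
    apply: (@cop_div a a b c) => //; rewrite e; exact: dvdn_mull.
  lia.
- right; right; nia.
- left; nia.
Qed.

Lemma caseB m r a b : 1 <= m -> r <= 3 -> (r = 3 -> 2 <= m) -> coprime a b -> 0 < b <= 4* m+r -> a <= b ->
  2* m*b <= a*(4* m+1) -> a*(4* m) < (2* m+1)*b ->
  (a = 2* m /\ b = 4* m+1) \/ (a = 1 /\ b = 2) \/ (m+1 <= a <= 2* m+1 /\ b = 2*a-1)
  \/ (r = 3 /\ ((a = 2* m+1 /\ b = 4* m+3) \/ (a = 2* m+2 /\ b = 4* m+3))).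
Proof.
move=> m1 r3 r3m c hb ab h1 h2.
have l1 : b <= 2*a+1 by nia.
have l2 : 2*a <= b+2.
  case: (r =P 3) => [er|nr]; first by have := r3m er; nia.
  nia.
have [e|[e|[e|e]]] : b = 2*a \/ b = 2*a+1 \/ b + 1 = 2*a \/ b + 2 = 2*a by lia.
- right; left; have a1 : a = 1.
    apply: (@cop_div a a b c) => //; rewrite e; exact: dvdn_mull.
  lia.
- subst b; have : 2* m <= a by nia.
  move=> am.
  have [->|ne] := eqVneq a (2* m); first by left; lia.
  right; right; right; lia.
- have am : m+1 <= a by nia.
  have [le|gt] := leqP a (2* m+1); first by right; right; left; lia.
  right; right; right; lia.
- exfalso; have am : 2* m+2 <= a by nia.
  have e2 : b = 4* m+2 by lia.
  have : 2 = 1.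
    apply: (@cop_div 2 a b c).
    + apply/dvdnP; exists (m+1); lia.
    + apply/dvdnP; exists (2* m+1); lia.
  by [].
Qed.

Lemma mainA k n : n = 4*k+4 -> f n <= (k+1) + 1.
Proof.
move=> En.
pose L := (2*k+1, 4*k+4) :: (1,2) :: [seq (i+(k+1), 2*(i+(k+1))+1) | i <- iota 0 (k+1)].
apply: (@key n (2*k+1, 4*k+4) (2*k+2, 4*k+3) L).
- rewrite mem_farey /=; apply/and3P; split; last lia; last lia.
  apply: (@cop_of _ _ (2*k+1) k); nia.
- rewrite mem_farey /=; apply/and3P; split; last lia; last lia.
  apply: (@cop_of _ _ 2 1); nia.
- rewrite /=; lia.
- rewrite /=; lia.
- rewrite /leF /=; nia.
- move=> [a b]; rewrite mem_farey /leF /= => /and3P [c hb ab] h1 h2; rewrite -ltnNge in h2.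
  have hb' : 0 < b <= 4*k+4 by rewrite -En.
  case: (@caseA k a b c hb' ab h1 h2) => [[-> ->]|[[-> ->]|[ha ->]]].
  + by rewrite inE eqxx.
  + by rewrite !inE eqxx orbT.
  + rewrite !inE; apply/orP; right; apply/orP; right.
    apply/mapP; exists (a - (k+1)); first by rewrite mem_iota; lia.
    congr pair; lia.
- by rewrite /L /= size_map size_iota; lia.
Qed.

Lemma mainB m r n : n = 4* m + r -> 1 <= r <= 3 -> 1 <= m -> (r = 3 -> 2 <= m) ->
  f n <= m + (if r == 3 then 4 else 2).
Proof.
move=> En hr m1 r3m.
pose L := (2* m, 4* m+1) :: (1,2) :: [seq (i+m+1, 2*(i+m+1)-1) | i <- iota 0 (m+1)]
   ++ (if r == 3 then [:: (2* m+1, 4* m+3); (2* m+2, 4* m+3)] else [::]).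
apply: (@key n (2* m, 4* m+1) (2* m+1, 4* m) L).
- rewrite mem_farey /=; apply/and3P; split; last lia; last lia.
  rewrite coprime_sym; apply: (@cop_of _ _ 1 2); nia.
- rewrite mem_farey /=; apply/and3P; split; last lia; last lia.
  apply: (@cop_of _ _ (2* m+1) (m+1)); nia.
- rewrite /=; lia.
- rewrite /=; lia.
- rewrite /leF /=; nia.
- move=> [a b]; rewrite mem_farey /leF /= => /and3P [c hb ab] h1 h2; rewrite -ltnNge in h2.
  have hb' : 0 < b <= 4* m+r by rewrite -En.
  have r3 : r <= 3 by lia.
  case: (@caseB m r a b m1 r3 r3m c hb' ab h1 h2) => [[-> ->]|[[-> ->]|[[ha ->]|[er [[-> ->]|[-> ->]]]]]].
  + by rewrite inE eqxx.
  + by rewrite !inE eqxx orbT.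
  + rewrite !inE; apply/orP; right; apply/orP; right.
    rewrite mem_cat; apply/orP; left.
    apply/mapP; exists (a - (m+1)); first by rewrite mem_iota; lia.
    congr pair; lia.
  + subst r; rewrite !inE mem_cat /= !inE eqxx; by rewrite !orbT.
  + subst r; rewrite !inE mem_cat /= !inE eqxx; by rewrite !orbT.
- rewrite /L /= size_cat size_map size_iota.
  by case: eqP => _ /=; lia.
Qed.

Lemma main7 : f 7 <= 5.
Proof.
pose x := (1,6); pose y := (2,5).
pose L := [seq z <- farey 7 | leF x z && ~~ leF y z].
apply: (@key 7 x y L) => //.
- by move=> z zF h1 h2; rewrite mem_filter h1 h2 zF.
Qed.

Theorem theorem1 (n : nat) : 4 <= n -> f n <= n %/ 4 + dfarey n.
Proof.
move=> hn; rewrite /dfarey.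
have hd := divn_eq n 4; have hm := @ltn_pmod n 4 isT.
case E: (n %% 4) => [|[|[|[|r]]]]; last by lia.
- have ek : n %/ 4 = (n %/ 4 - 1).+1 by lia.
  move: ek; set k := n %/ 4 - 1 => ek.
  have En : n = 4*k+4 by lia.
  rewrite ek; have := @mainA k n En. lia.
- have En : n = 4 * (n %/ 4) + 1 by lia.
  have m1 : 1 <= n %/ 4 by lia.
  by have := @mainB (n %/ 4) 1 n En isT m1 (fun h => match h with end).
- have En : n = 4 * (n %/ 4) + 2 by lia.
  have m1 : 1 <= n %/ 4 by lia.
  by have := @mainB (n %/ 4) 2 n En isT m1 (fun h => match h with end).
- have [e7|n7] := eqVneq n 7; first by subst n; exact: main7.
  have En : n = 4 * (n %/ 4) + 3 by lia.
  have m1 : 1 <= n %/ 4 by lia.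
  have m2 : 3 = 3 -> 2 <= n %/ 4 by move=> _; lia.
  by have := @mainB (n %/ 4) 3 n En isT m1 m2.
Qed.
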